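(* For an integer $k\ge 1$, let $T_k$ be the tree on $9k+4$ vertices with vertex set $\{v_0,v_1,v_2,v_3\}\cup\{x_{ij},y_{ij},z_{ij}: 1\le i\le 3,\ 1\le j\le k\}$ and edges $v_0v_i$ for $1\le i\le 3$, and $v_ix_{ij}$, $x_{ij}y_{ij}$, $y_{ij}z_{ij}$ for all $1\le i\le 3$, $1\le j\le k$ (so each $v_i$ has $k$ pendant paths $x_{ij}y_{ij}z_{ij}$ attached at $x_{ij}$). Then for every $k\ge 4$, the domination polynomial $D(T_k,x)$ is not log-concave.
   Context: A dominating set of a graph $G=(V,E)$ is a set $S\subseteq V$ such that every vertex is in $S$ or adjacent to a vertex of $S$. For a graph $G$ of order $n$, let $d_i$ be the number of dominating sets of $G$ of cardinality $i$; the domination polynomial is $D(G,x)=\sum_{i=0}^n d_i x^i$. A polynomial $a_0+a_1x+\cdots+a_nx^n$ is log-concave if $a_i^2\ge a_{i-1}a_{i+1}$ for every $1\le i\le n-1$. *)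

(* Defs.v *)
From mathcomp Require Import all_boot all_order all_algebra.
Set Implicit Arguments. Unset Strict Implicit. Unset Printing Implicit Defensive.
Import GRing.Theory.
Local Open Scope ring_scope.

Definition dominating (V : finType) (adj : rel V) (S : {set V}) : bool :=
  [forall v, (v \in S) || [exists u in S, adj v u]].

Definition dom_count (V : finType) (adj : rel V) (i : nat) : nat :=
  #|[set S : {set V} | dominating adj S & #|S| == i]|.

Definition dom_poly (V : finType) (adj : rel V) : {poly int} :=
  \poly_(i < #|V|.+1) (dom_count adj i)%:Z.

Definition log_concave (p : {poly int}) (n : nat) : Prop :=
  forall i : nat, (1 <= i)%N -> (i <= n.-1)%N ->
    p`_(i.-1) * p`_(i.+1) <= p`_i ^+ 2.

(* Vertices of T_k:
   inl (inl tt)            = v_0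
   inl (inr i)             = v_{i+1}, i : 'I_3
   inr (i, j, 0/1/2)       = x_{i+1,j+1}, y_{i+1,j+1}, z_{i+1,j+1} *)
Definition Tk_vertex (k : nat) : finType :=
  ((unit + 'I_3) + ('I_3 * 'I_k * 'I_3))%type.

Definition Tk_edge (k : nat) (a b : Tk_vertex k) : bool :=
  match a, b with
  | inl (inl _), inl (inr _) => true
  | inl (inr i), inr (i', _, l) => (i == i') && (val l == 0)%N
  | inr (i, j, l), inr (i', j', l') =>
      (i == i') && (j == j') && (val l'  == (val l).+1)%N
  | _, _ => false
  end.

Definition Tk_adj (k : nat) : rel (Tk_vertex k) :=
  fun a b => Tk_edge a b || Tk_edge b a.

(* Main.v *)
Require Import Defs.
From mathcomp Require Import all_boot all_order all_algebra.
Set Implicit Arguments. Unset Strict Implicit. Unset Printing Implicit Defensive.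

Notation l0 := (@Ordinal 3 0 isT).
Notation l1 := (@Ordinal 3 1 isT).
Notation l2 := (@Ordinal 3 2 isT).

Ltac dest := repeat match goal with
 | H : is_true (_ || _) |- _ => case/orP: H => H
 | H : is_true (_ && _) |- _ => let H' := fresh in case/andP: H => H H'
 | H : is_true (@eq_op _ _ _) |- _ => move/eqP: H => H
 end.

Section S.
Variable k : nat.
Notation V := (Tk_vertex k).
Notation P := ('I_3 * 'I_k)%type.
Definition v0 : V := inl (inl tt).
Definition vi (i : 'I_3) : V := inl (inr i).
Definition pv (p : P) (l : 'I_3) : V := inr (p, l).

Lemma I3_cases (l : 'I_3) : [\/ l = l0, l = l1 | l = l2].
Proof.
case: l => [[|[|[|n]]] H]; [constructor 1|constructor 2|constructor 3|by []];
 by apply/val_inj.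
Qed.

Ltac cases_u u := case: u => [[[]|?]|[[? ?] +]]; last (let L := fresh "l" in move=> L; case: (I3_cases L) => ->).

Lemma adj_z p u : Tk_adj (pv p l2) u -> u = pv p l1.
Proof.
case: p => i j; cases_u u; rewrite /Tk_adj /= => H; dest; subst => //.
Qed.

Lemma adj_y p u : Tk_adj (pv p l1) u -> u = pv p l0 \/ u = pv p l2.
Proof.
case: p => i j; cases_u u; rewrite /Tk_adj /= => H; dest; subst => //; by [left|right].
Qed.

Lemma adj_x p u : Tk_adj (pv p l0) u -> u = vi p.1 \/ u = pv p l1.
Proof.
case: p => i j; cases_u u; rewrite /Tk_adj /= => H; dest; subst => //; by [left|right].
Qed.

Lemma adj_vi i u : Tk_adj (vi i) u -> u = v0 \/ exists j, u = pv (i, j) l0.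
Proof.
cases_u u; rewrite /Tk_adj /= => H; dest; subst => //; try by left.
by right; eexists.
Qed.

Lemma adj_v0 u : Tk_adj v0 u -> exists i, u = vi i.
Proof.
cases_u u; rewrite /Tk_adj /= => H; dest; subst => //; by eexists.
Qed.


Definition mk (A : {set V}) (s : P -> 'I_3) : {set V} :=
  A :|: [set pv p (s p) | p : P].

Lemma pv_inj p q l l' : pv p l = pv q l' -> p = q /\ l = l'.
Proof. by case. Qed.

Lemma mem_img_pv p l (s : P -> 'I_3) :
  (pv p l \in [set pv q (s q) | q : P]) = (s p == l).
Proof.
apply/imsetP/eqP => [[q _ /pv_inj [-> ->]] //|<-].
by exists p.
Qed.

Lemma mem_img_inl a (s : P -> 'I_3) :
  ((inl a : V) \in [set pv q (s q) | q : P]) = false.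
Proof. by apply/imsetP => [[q _]]. Qed.

Lemma mem_vimg_pv p l (T : finType) (f : T -> 'I_3) (X : {set T}) :
  (pv p l \in [set vi (f i) | i in X]) = false.
Proof. by apply/imsetP => [[q _]]. Qed.

Lemma mem_vimg_pv1 p l : (pv p l \in [set vi i | i : 'I_3]) = false.
Proof. by apply/imsetP => [[q _]]. Qed.

Lemma mem_vimg_pv2 p l (m : 'I_3) : (pv p l \in [set vi (lift m i) | i : 'I_2]) = false.
Proof. by apply/imsetP => [[q _]]. Qed.

Lemma cardP : #|{: P}| = 3 * k.
Proof. by rewrite card_prod !card_ord. Qed.

Lemma card_img (s : P -> 'I_3) : #|[set pv q (s q) | q : P]| = 3 * k.
Proof.
rewrite card_imset ?cardsT ?cardP //.
by move=> p q /pv_inj [].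
Qed.

Lemma card_mk_le (A : {set V}) s : #|mk A s| <= #|A| + 3 * k.
Proof. by rewrite /mk cardsU card_img leq_subr. Qed.

Lemma card_mk_eq (A : {set V}) s : (forall p, pv p (s p) \notin A) -> #|mk A s| = #|A| + 3 * k.
Proof.
move=> H; rewrite /mk cardsU card_img.
suff -> : A :&: [set pv q (s q) | q : P] = set0 by rewrite cards0 subn0.
apply/setP => u; rewrite !inE; apply/negP => /andP [uA /imsetP [q _ E]].
by move: (H q); rewrite -E uA.
Qed.

Definition dom1 (S : {set V}) (v : V) := (v \in S) || [exists u in S, Tk_adj v u].

Lemma domI (S : {set V}) : (forall v, dom1 S v) -> dominating (@Tk_adj k) S.
Proof. by move=> H; rewrite /dominating; apply/forallP. Qed.

Lemma domE (S : {set V}) v : dominating (@Tk_adj k) S -> dom1 S v.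
Proof. by rewrite /dominating => /forallP H; apply: H. Qed.

Lemma dom1_adj (S : {set V}) v u : u \in S -> Tk_adj v u -> dom1 S v.
Proof. by move=> uS a; apply/orP; right; apply/existsP; exists u; rewrite uS. Qed.

Lemma dom1_in (S : {set V}) v : v \in S -> dom1 S v.
Proof. by rewrite /dom1 => ->. Qed.

Lemma dom1_cases (S : {set V}) v : dom1 S v -> v \in S \/ exists2 u, u \in S & Tk_adj v u.
Proof.
case/orP => [|/existsP [u /andP [uS a]]]; first by left.
by right; exists u.
Qed.

Lemma adj_v0i i : Tk_adj v0 (vi i). Proof. by []. Qed.
Lemma adj_iv0 i : Tk_adj (vi i) v0. Proof. by []. Qed.
Lemma adj_ix i j : Tk_adj (vi i) (pv (i, j) l0). Proof. by rewrite /Tk_adj /= eqxx. Qed.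
Lemma adj_xi p : Tk_adj (pv p l0) (vi p.1). Proof. by case: p => i j; rewrite /Tk_adj /= eqxx. Qed.
Lemma adj_xy p : Tk_adj (pv p l0) (pv p l1). Proof. by case: p => i j; rewrite /Tk_adj /= !eqxx. Qed.
Lemma adj_yx p : Tk_adj (pv p l1) (pv p l0). Proof. by case: p => i j; rewrite /Tk_adj /= !eqxx ?orbT. Qed.
Lemma adj_yz p : Tk_adj (pv p l1) (pv p l2). Proof. by case: p => i j; rewrite /Tk_adj /= !eqxx ?orbT. Qed.
Lemma adj_zy p : Tk_adj (pv p l2) (pv p l1). Proof. by case: p => i j; rewrite /Tk_adj /= !eqxx ?orbT. Qed.

Lemma dom_mk_path (A : {set V}) s p l : s p != l0 ->
  [|| s p == l1, vi p.1 \in A | pv p l0 \in A] -> dom1 (mk A s) (pv p l).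
Proof.
move=> sp0 H.
have yin : s p = l1 -> pv p l1 \in mk A s.
  by move=> E; rewrite /mk in_setU mem_img_pv E eqxx orbT.
have zin : s p = l2 -> pv p l2 \in mk A s.
  by move=> E; rewrite /mk in_setU mem_img_pv E eqxx orbT.
have s12 : s p = l1 \/ s p = l2.
  by case: (I3_cases (s p)) sp0 => ->; auto.
case: (I3_cases l) => ->.
- case/or3P: H => [/eqP E|vA|xA].
  + exact: (dom1_adj (yin E) (adj_xy p)).
  + by apply: (dom1_adj _ (adj_xi p)); rewrite /mk in_setU vA.
  + by apply: dom1_in; rewrite /mk in_setU xA.
- case: s12 => E; first exact: dom1_in (yin E).
  exact: (dom1_adj (zin E) (adj_yz p)).
- case: s12 => E; last exact: dom1_in (zin E).
  exact: (dom1_adj (yin E) (adj_zy p)).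
Qed.


Definition sb (b : bool) : 'I_3 := if b then l2 else l1.
Lemma sb_neq0 b : sb b != l0. Proof. by case: b. Qed.
Lemma sb_eq2 b : (sb b == l2) = b. Proof. by case: b. Qed.

Definition F1 (g : {ffun P -> bool}) : {set V} :=
  mk [set vi i | i : 'I_3] (fun p => sb (g p)).

Definition s2 (m : 'I_3) (j : 'I_k) (b : bool) (g : {ffun 'I_2 * 'I_k -> bool}) (p : P) :=
  match unlift m p.1 with
  | None => sb ((p.2 == j) && b)
  | Some i => sb (g (i, p.2))
  end.

Definition A2 (m : 'I_3) (j : 'I_k) : {set V} :=
  pv (m, j) l0 |: [set vi (lift m i) | i : 'I_2].

Definition F2 m j b g : {set V} := mk (A2 m j) (s2 m j b g).

Definition F0 : {set V} := mk [set v0] (fun _ => l1).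

Lemma s2_neq0 m j b g p : s2 m j b g p != l0.
Proof. by rewrite /s2; case: unlift => *; apply: sb_neq0. Qed.

Lemma vi_inj : injective vi. Proof. by move=> ? ? []. Qed.

Lemma F1_dom g : dominating (@Tk_adj k) (F1 g).
Proof.
apply: domI => -[[[]|i]|[p l]].
- by apply: (dom1_adj _ (adj_v0i l0)); rewrite /F1 /mk in_setU imset_f.
- by apply: dom1_in; rewrite /F1 /mk in_setU imset_f.
- apply: dom_mk_path; first exact: sb_neq0.
  by rewrite imset_f ?orbT.
Qed.

Lemma F1_card g : #|F1 g| = 3 * k + 3.
Proof.
rewrite /F1 card_mk_eq; last by move=> p; rewrite mem_vimg_pv1.
by rewrite card_imset ?cardsT ?card_ord 1?addnC //; exact: vi_inj.
Qed.

Lemma F2_dom m j b g : dominating (@Tk_adj k) (F2 m j b g).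
Proof.
have inA : forall u, u \in A2 m j -> u \in F2 m j b g.
  by move=> u uA; rewrite /F2 /mk in_setU uA.
apply: domI => -[[[]|i]|[p l]].
- apply: (dom1_adj (inA _ _) (adj_v0i (lift m ord0))).
  by rewrite /A2 in_setU1; apply/orP; right; apply/imsetP; exists ord0.
- case: (unliftP m i) => [i'|] ->.
    apply: dom1_in; apply: inA.
    by rewrite /A2 in_setU1; apply/orP; right; apply/imsetP; exists i'.
  by apply: (dom1_adj (inA _ _) (adj_ix m j)); rewrite /A2 in_setU1 eqxx.
- apply: dom_mk_path; first exact: s2_neq0.
  case: p => i j'; rewrite /s2 /=.
  case: (unliftP m i) => [i'|] ->.
    by rewrite /A2 in_setU1; apply/orP; right; apply/orP; left; apply/imsetP; exists i'.
  case: (eqVneq j' j) => [->|ne].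
    by rewrite /A2 setU11 !orbT.
  by [].
Qed.

Lemma F2_card m j b g : #|F2 m j b g| = 3 * k + 3.
Proof.
rewrite /F2 card_mk_eq; last first.
  move=> p; rewrite /A2 in_setU1 mem_vimg_pv2 orbF; apply/eqP => /pv_inj [_ E].
  by move: (s2_neq0 m j b g p); rewrite E eqxx.
rewrite /A2 cardsU1 mem_vimg_pv2 card_imset ?cardsT ?card_ord; first by rewrite addnC.
by move=> x y /vi_inj /lift_inj.
Qed.

Lemma F0_dom : dominating (@Tk_adj k) F0.
Proof.
have v0in : v0 \in F0 by rewrite /F0 /mk in_setU set11.
apply: domI => -[[[]|i]|[p l]].
- exact: dom1_in.
- exact: (dom1_adj v0in (adj_iv0 i)).
- by apply: dom_mk_path; rewrite ?eqxx.
Qed.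

Lemma F0_card : #|F0| = 3 * k + 1.
Proof.
rewrite /F0 card_mk_eq ?cards1 1?addnC // => p.
by rewrite in_set1.
Qed.


Lemma pv_eq p q l l' : (pv p l == pv q l') = (p == q) && (l == l').
Proof.
apply/eqP/andP => [/pv_inj [-> ->] //|[/eqP -> /eqP ->] //].
Qed.

Lemma vi_pv i p l : (vi i == pv p l) = false. Proof. by []. Qed.

Lemma memF1_v i g : vi i \in F1 g.
Proof. by rewrite /F1 /mk in_setU imset_f. Qed.

Lemma memF1_pv p l g : (pv p l \in F1 g) = (sb (g p) == l).
Proof. by rewrite /F1 /mk in_setU mem_vimg_pv1 mem_img_pv. Qed.

Lemma memF2_v i m j b g : (vi i \in F2 m j b g) = (i != m).
Proof.
rewrite /F2 /mk in_setU mem_img_inl orbF /A2 in_setU1 vi_pv /=.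
case: (unliftP m i) => [i'|] ->.
  by rewrite eq_sym neq_lift; apply/imsetP; exists i'.
rewrite eqxx; apply/imsetP => -[i' _ /vi_inj E].
by move: (neq_lift m i'); rewrite -E eqxx.
Qed.

Lemma memF2_pv p l m j b g :
  (pv p l \in F2 m j b g) = ((p == (m, j)) && (l == l0)) || (s2 m j b g p == l).
Proof.
by rewrite /F2 /mk in_setU mem_img_pv /A2 in_setU1 mem_vimg_pv2 orbF pv_eq.
Qed.

Definition Tlow := ({ffun P -> bool} + ('I_3 * 'I_k * bool * {ffun 'I_2 * 'I_k -> bool}))%type.

Definition recl (t : Tlow) : {set V} :=
  match t with
  | inl g => F1 g
  | inr (m, j, b, g) => F2 m j b g
  end.

Lemma recl_inj : injective recl.
Proof.
move=> [g|[[[m j] b] g]] [g'|[[[m' j'] b'] g']] /= E.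
- congr inl; apply/ffunP => p.
  by move: (congr1 (fun S : {set V} => pv p l2 \in S) E); rewrite /= !memF1_pv !sb_eq2.
- by move: (congr1 (fun S : {set V} => vi m' \in S) E); rewrite /= memF1_v memF2_v eqxx.
- by move: (congr1 (fun S : {set V} => vi m \in S) E); rewrite /= memF1_v memF2_v eqxx.
- have mm : m = m'.
    move: (congr1 (fun S : {set V} => vi m \in S) E); rewrite /= !memF2_v eqxx.
    by case: eqP.
  subst m'.
  have jj : j = j'.
    move: (congr1 (fun S : {set V} => pv (m, j) l0 \in S) E); rewrite /= !memF2_pv !eqxx /=.
    rewrite (negbTE (s2_neq0 _ _ _ _ _)) orbF.
    by rewrite andbT xpair_eqE eqxx /= => /esym /eqP.
  subst j'.
  have bb : b = b'.
    move: (congr1 (fun S : {set V} => pv (m, j) l2 \in S) E); rewrite /= !memF2_pv !eqxx /=.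
    by rewrite /s2 /= unlift_none eqxx /= !sb_eq2.
  subst b'.
  congr inr; congr pair; apply/ffunP => -[i j0].
  move: (congr1 (fun S : {set V} => pv (lift m i, j0) l2 \in S) E); rewrite /= !memF2_pv /=.
  by rewrite /s2 /= liftK !sb_eq2 !andbF.
Qed.

Lemma recl_in t : recl t \in [set S : {set V} | dominating (@Tk_adj k) S & #|S| == 3 * k + 3].
Proof.
rewrite inE; case: t => [g|[[[m j] b] g]] /=.
  by rewrite F1_dom F1_card eqxx.
by rewrite F2_dom F2_card eqxx.
Qed.

Lemma d3_ge : 2 ^ (3 * k) + 3 * k * 2 * 2 ^ (2 * k) <= dom_count (@Tk_adj k) (3 * k + 3).
Proof.
rewrite /dom_count.
have <- : #|[set recl t | t : Tlow]| = 2 ^ (3 * k) + 3 * k * 2 * 2 ^ (2 * k).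
  rewrite card_imset ?cardsT; last exact: recl_inj.
  rewrite card_sum !card_ffun !card_prod !card_bool !card_ord card_ffun card_prod !card_ord card_bool.
  by [].
apply: subset_leq_card; apply/subsetP => S /imsetP [t _ ->]; exact: recl_in.
Qed.

Lemma d1_ge : 1 <= dom_count (@Tk_adj k) (3 * k + 1).
Proof.
rewrite /dom_count card_gt0; apply/set0Pn; exists F0.
by rewrite inE F0_dom F0_card eqxx.
Qed.


Definition Tup := ('I_3 * {ffun 'I_k -> bool} + P * 'I_3)%type.

Definition recu (t : Tup) : {set V} :=
  match t with
  | inl (i, f) => mk [set v0; vi i] (fun p => sb ((p.1 == i) && f p.2))
  | inr (p0, m) => mk [set v0; pv p0 (if m == l0 then l2 else l0)]
                      (fun p => sb ((p == p0) && (m == l1)))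
  end.

Lemma card_recu t : #|recu t| <= 3 * k + 2.
Proof.
case: t => [[i f]|[p0 m]] /=; apply: (leq_trans (card_mk_le _ _));
  by rewrite addnC leq_add2l cards2.
Qed.

Lemma vi_eq a b : (vi a == vi b) = (a == b).
Proof. by apply/eqP/eqP => [/vi_inj|->]. Qed.

Lemma char_up (S : {set V}) : dominating (@Tk_adj k) S -> #|S| = 3 * k + 2 ->
  exists t, S = recu t.
Proof.
move=> domS cS.
pose hl p : 'I_3 := if pv p l1 \in S then l1 else l2.
pose H := [set pv p (hl p) | p : P].
have hl0 p : hl p != l0 by rewrite /hl; case: ifP.
have HS : H \subset S.
  apply/subsetP => _ /imsetP [p _ ->]; rewrite /hl; case: ifP => // yS.
  case: (dom1_cases (domE (pv p l2) domS)) => // -[u uS /adj_z E].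
  by move: yS; rewrite -E uS.
have cH : #|H| = 3 * k := card_img hl.
set R := S :\: H.
have cR : #|R| = 2 by rewrite cardsD (setIidPr HS) cS cH addKn.
have memH p l : (pv p l \in H) = (hl p == l) := mem_img_pv p l hl.
have memHl a : (inl a \in H) = false := mem_img_inl a hl.
have v0S : v0 \in S.
  apply/negPn/negP => nv0.
  suff : 3 <= #|R| by rewrite cR.
  pose br (u : V) : option 'I_3 :=
    match u with inl (inl _) => None | inl (inr i) => Some i | inr (p, _) => Some p.1 end.
  apply: (leq_trans _ (leq_imset_card br R)).
  apply: (@leq_trans #|[set Some i | i : 'I_3]|).
    by rewrite card_imset ?cardsT ?card_ord //; move=> ? ? [].
  apply: subset_leq_card; apply/subsetP => _ /imsetP [i _ ->].
  case: (dom1_cases (domE (vi i) domS)) => [viS | [u uS /adj_vi [E|[j E]]]].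
  - apply/imsetP; exists (vi i) => //.
    by rewrite /R in_setD viS andbT /vi memHl.
  - by move: uS nv0; rewrite E => ->.
  - apply/imsetP; exists u; last by rewrite E.
    by rewrite /R in_setD uS E memH (negbTE (hl0 _)).
have v0R : v0 \in R by rewrite in_setD v0S /v0 memHl.
have c1 : #|R :\ v0| == 1.
  by move: (cardsD1 v0 R); rewrite cR v0R add1n => -[<-].
case/cards1P: c1 => w Ew.
have wR : w \in R :\ v0 by rewrite Ew set11.
have memS u : (u \in S) = [|| u \in H, u == v0 | u == w].
  apply/idP/idP.
  - move=> uS; case uH: (u \in H) => //=; case: eqP => //= /eqP nv.
    have : u \in R :\ v0 by rewrite in_setD1 nv in_setD uS uH.
    by rewrite Ew in_set1.
  - case/or3P => [/(subsetP HS) //|/eqP -> //|/eqP ->].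
    by move: wR; rewrite in_setD1 in_setD => /and3P [_ _ ->].
have wv0 : w != v0 by move: wR; rewrite in_setD1 => /andP [].
have wH : w \notin H by move: wR; rewrite in_setD1 in_setD => /and3P [].
have yS p : pv p l0 \notin S -> vi p.1 \notin S -> pv p l1 \in S.
  move=> nx nv; case: (dom1_cases (domE (pv p l0) domS)) => [xS|[u uS /adj_x [E|E]]].
  - by rewrite xS in nx.
  - by rewrite -E uS in nv.
  - by rewrite -E.
have hl1 p : pv p l0 \notin S -> vi p.1 \notin S -> hl p = l1.
  by move=> nx nv; rewrite /hl (yS p nx nv).
have fin t : H \subset recu t -> v0 \in recu t -> w \in recu t -> S = recu t.
  move=> Ht v0t wt; apply/eqP; rewrite eqEcard cS card_recu andbT.
  apply/subsetP => u; rewrite memS => /or3P [/(subsetP Ht) //|/eqP -> //|/eqP -> //].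
case: w Ew wR wv0 wH memS fin => [[[]|i]|[[i0 j0] l]] _ _ wv0 wH memS fin.
- by move: wv0; rewrite /v0 eqxx.
- exists (inl (i, [ffun j => pv (i, j) l1 \notin S])); apply: fin.
  + apply/subsetP => _ /imsetP [[i' j] _ ->]; rewrite /recu /mk in_setU mem_img_pv ffunE /=.
    case: (eqVneq i' i) => [->|ne] /=.
      by rewrite /hl; case: ifP => _; rewrite eqxx orbT.
    rewrite hl1 ?eqxx ?orbT //.
      by rewrite memS memH (negbTE (hl0 _)).
    by rewrite memS /vi memHl /= vi_eq ne.
  + by rewrite /recu /mk in_setU set21.
  + by rewrite /recu /mk in_setU set22.
- have hlne p : p != (i0, j0) -> hl p = l1.
    move=> ne; apply: hl1.
    + rewrite memS memH (negbTE (hl0 _)) /=.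
      by rewrite -[inr _]/(pv _ _) pv_eq (negbTE ne).
    + by rewrite memS /vi memHl.
  case: (I3_cases l) => El; subst l.
  + case yP: (pv (i0, j0) l1 \in S).
    * exists (inr ((i0, j0), l2)); apply: fin.
      -- apply/subsetP => _ /imsetP [p _ ->]; rewrite /recu /mk in_setU mem_img_pv /= andbF /=.
         case: (eqVneq p (i0, j0)) => [->|ne]; last by rewrite hlne // eqxx orbT.
         by rewrite /hl yP eqxx orbT.
      -- by rewrite /recu /mk in_setU set21.
      -- by rewrite /recu /mk in_setU set22.
    * exists (inr ((i0, j0), l1)); apply: fin.
      -- apply/subsetP => _ /imsetP [p _ ->]; rewrite /recu /mk in_setU mem_img_pv /= andbT.
         case: (eqVneq p (i0, j0)) => [->|ne]; last by rewrite hlne // eqxx orbT.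
         by rewrite /hl yP eqxx orbT.
      -- by rewrite /recu /mk in_setU set21.
      -- by rewrite /recu /mk in_setU set22.
  + by move: wH; rewrite -[inr _]/(pv _ _) memH /hl memS eqxx !orbT.
  + have yP : pv (i0, j0) l1 \in S.
      by move: wH; rewrite -[inr _]/(pv _ _) memH /hl; case: ifP.
    exists (inr ((i0, j0), l0)); apply: fin.
    * apply/subsetP => _ /imsetP [p _ ->]; rewrite /recu /mk in_setU mem_img_pv /= andbF /=.
      case: (eqVneq p (i0, j0)) => [->|ne]; last by rewrite hlne // eqxx orbT.
      by rewrite /hl yP eqxx orbT.
    * by rewrite /recu /mk in_setU set21.
    * by rewrite /recu /mk in_setU set22.
Qed.


Lemma d2_le : dom_count (@Tk_adj k) (3 * k + 2) <= 3 * 2 ^ k + 3 * k * 3.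
Proof.
rewrite /dom_count.
apply: (@leq_trans #|[set recu t | t : Tup]|).
  apply: subset_leq_card; apply/subsetP => S; rewrite inE => /andP [dS /eqP cS].
  by case: (char_up dS cS) => t ->; rewrite imset_f.
apply: (leq_trans (leq_imset_card _ _)).
by rewrite card_sum !card_prod card_ffun !card_ord card_bool.
Qed.

End S.

From mathcomp Require Import zify.

Lemma pow_ge n : 4 <= n -> 4 * n <= 2 ^ n.
Proof.
elim: n => [//|n IH] h.
case: (eqVneq n 3) => [-> //|ne].
have : 4 <= n by lia.
move/IH => h'; rewrite expnS; lia.
Qed.

Lemma final_ineq (k a d1 d2 d3 : nat) : 4 <= k -> 4 * k <= a ->
  1 <= d1 -> a ^ 3 + 3 * k * 2 * a ^ 2 <= d3 -> d2 <= 3 * a + 3 * k * 3 ->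
  d1 * d3 <= d2 * d2 -> False.
Proof.
move=> hk ha h1 h3 h2 hp.
have e1 : d3 <= d1 * d3 by rewrite leq_pmull.
have e2 : d2 * d2 <= (3 * a + 9 * k) * (3 * a + 9 * k).
  by apply: leq_mul; lia.
have e3 : (3 * a + 9 * k) * (3 * a + 9 * k) < a ^ 3 + 3 * k * 2 * a ^ 2.
  nia.
lia.
Qed.

Import GRing.Theory.

Theorem proposition2p1 (k : nat) : (4 <= k)%N ->
  ~ log_concave (dom_poly (@Tk_adj k)) #|Tk_vertex k|.
Proof.
move=> k4 H.
have cV : #|Tk_vertex k| = 9 * k + 4.
  rewrite /Tk_vertex !card_sum !card_prod card_unit !card_ord; lia.
move: (H (3 * k + 2) ltac:(lia) ltac:(rewrite cV; lia)).
have -> : (3 * k + 2).-1 = 3 * k + 1 by lia.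
have -> : (3 * k + 2).+1 = 3 * k + 3 by lia.
rewrite /dom_poly !coef_poly cV !ifT; [|lia|lia|lia].
rewrite GRing.expr2 -!PoszM lez_nat => hp.
have h3 := d3_ge k; have h2 := d2_le k; have h1 := d1_ge k.
rewrite (mulnC 3 k) expnM (mulnC 2 k) expnM in h3.
rewrite -(mulnC 3 k) in h3.
exact: (@final_ineq k (2 ^ k) _ _ _ k4 (pow_ge k4) h1 h3 h2 hp).
Qed.
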